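(* Let $G$ be a tree on vertex set $[n]$ with $m$ internal (non-leaf) vertices and maximum path length $p$ (the number of edges of a longest path in $G$). Let $\mathrm{CIM}_G=\operatorname{conv}\left(c_\mathcal{G}\colon \mathcal{G}\text{ a DAG on }[n]\text{ with skeleton } G\right)$. Then $\left\lfloor \frac{p}{2}\right\rfloor\leq \operatorname{diam}(\mathrm{CIM}_G)\leq m$.
   Context: For a directed acyclic graph (DAG) $\mathcal{G}$ on vertex set $[n]=\{1,\dots,n\}$, the characteristic imset $c_\mathcal{G}$ is the 0/1-vector indexed by the subsets $S\subseteq[n]$ with $|S|\geq 2$, with $c_\mathcal{G}(S)=1$ if there exists $i\in S$ such that $S\subseteq \mathrm{pa}_\mathcal{G}(i)\cup\{i\}$ (where $\mathrm{pa}_\mathcal{G}(i)$ is the set of parents of $i$), and $c_\mathcal{G}(S)=0$ otherwise. The skeleton of a DAG is the undirected graph with the same vertices and adjacencies. For a polytope $P$, the vertex-edge graph $G(P)$ has the vertices of $P$ as nodes, with two vertices adjacent iff their convex hull is an edge of $P$; $\operatorname{diam}(P)$ is the maximum over pairs of vertices of the length of a shortest path between them in $G(P)$. *)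

(* Defs.v *)
From HB Require Import structures.
From mathcomp Require Import all_boot all_order all_algebra.
Set Implicit Arguments. Unset Strict Implicit. Unset Printing Implicit Defensive.
Import Order.TTheory GRing.Theory Num.Theory.
Local Open Scope ring_scope.

Definition simple_graph (n : nat) (G : rel 'I_n) : Prop :=
  (forall x y, G x y = G y x) /\ (forall x, ~~ G x x).

Definition is_tree (n : nat) (G : rel 'I_n) : Prop :=
  simple_graph G /\ (0 < n)%N /\
  (forall x y, connect G x y) /\
  (forall s : seq 'I_n, uniq s -> (3 <= size s)%N -> ~~ cycle G s).

Definition num_internal (n : nat) (G : rel 'I_n) : nat :=
  #|[set v : 'I_n | (2 <= #|[set u | G v u]|)%N]|.

Definition longest_path_length (n : nat) (G : rel 'I_n) (p : nat) : Prop :=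
  (exists (x : 'I_n) (s : seq 'I_n), uniq (x :: s) /\ path G x s /\ size s = p) /\
  (forall (x : 'I_n) (s : seq 'I_n), uniq (x :: s) -> path G x s -> (size s <= p)%N).

(* D x y means an arrow x -> y; acyclic = no directed cycle *)
Definition is_dag (n : nat) (D : rel 'I_n) : Prop :=
  forall x y, D x y -> ~~ connect D y x.

Definition has_skeleton (n : nat) (D G : rel 'I_n) : Prop :=
  forall x y, G x y = D x y || D y x.

Definition parents (n : nat) (D : rel 'I_n) (i : 'I_n) : {set 'I_n} :=
  [set j | D j i].

Definition imset_idx (n : nat) := {S : {set 'I_n} | (1 < #|S|)%N}.

Definition point (R : realFieldType) (n : nat) := {ffun imset_idx n -> R}.

Definition char_imset (R : realFieldType) (n : nat) (D : rel 'I_n) : point R n :=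
  [ffun S : imset_idx n =>
     if [exists i in val S, val S \subset (parents D i :|: [set i])] then 1 else 0].

(* the (finite) generating set of CIM_G *)
Definition CIM_pts (R : realFieldType) (n : nat) (G : rel 'I_n) (x : point R n) : Prop :=
  exists D : rel 'I_n, is_dag D /\ has_skeleton D G /\ x = char_imset R D.

Definition dotp (R : realFieldType) (n : nat) (w x : point R n) : R :=
  \sum_(S : imset_idx n) w S * x S.

Definition in_segment (R : realFieldType) (n : nat) (u v y : point R n) : Prop :=
  exists t : R, 0 <= t <= 1 /\ y = [ffun S => t * u S + (1 - t) * v S].

Definition poly_vertex (R : realFieldType) (n : nat) (V : point R n -> Prop)
  (x : point R n) : Prop :=
  V x /\ exists w : point R n, forall y, V y -> y <> x -> dotp w y < dotp w x.

Definition poly_edge (R : realFieldType) (n : nat) (V : point R n -> Prop)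
  (u v : point R n) : Prop :=
  poly_vertex V u /\ poly_vertex V v /\ u <> v /\
  exists w : point R n,
    dotp w u = dotp w v /\
    (forall y, V y -> dotp w y <= dotp w u) /\
    (forall y, V y -> dotp w y = dotp w u -> in_segment u v y).

Definition has_walk (R : realFieldType) (n : nat) (V : point R n -> Prop)
  (u v : point R n) (k : nat) : Prop :=
  exists f : nat -> point R n, f 0%N = u /\ f k = v /\
    forall i, (i < k)%N -> poly_edge V (f i) (f i.+1).

Definition graph_dist (R : realFieldType) (n : nat) (V : point R n -> Prop)
  (u v : point R n) (k : nat) : Prop :=
  has_walk V u v k /\ forall j, has_walk V u v j -> (k <= j)%N.

Definition is_diam (R : realFieldType) (n : nat) (V : point R n -> Prop) (d : nat) : Prop :=
  (forall u v, poly_vertex V u -> poly_vertex V v ->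
     exists k, graph_dist V u v k /\ (k <= d)%N) /\
  (exists u v, poly_vertex V u /\ poly_vertex V v /\ graph_dist V u v d).

(* Main.v *)
Require Import Defs.
From HB Require Import structures.
From mathcomp Require Import all_boot all_order all_algebra.
From mathcomp Require Import lra zify.
From Stdlib Require Import Classical.
Set Implicit Arguments. Unset Strict Implicit. Unset Printing Implicit Defensive.
Import Order.TTheory GRing.Theory Num.Theory.

Section Basics.
Variables (n : nat) (G : rel 'I_n).
Hypothesis tG : is_tree G.

Definition orient (D : rel 'I_n) := has_skeleton D G /\ forall x y, D x y -> ~~ D y x.

Lemma tree_sym x y : G x y = G y x.
Proof. by case: tG => [[]]. Qed.

Lemma tree_irr x : G x x = false.
Proof. by case: tG => [[_ h] _]; apply/negbTE. Qed.

Lemma tree_acyc s : uniq s -> (3 <= size s)%N -> ~~ cycle G s.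
Proof. by case: tG => [_ [_ [_ h]]]; apply: h. Qed.

Lemma skel_sub D x y : has_skeleton D G -> D x y -> G x y.
Proof. by move=> sk Dxy; rewrite sk Dxy. Qed.

Lemma dag_orient D : is_dag D -> has_skeleton D G -> orient D.
Proof.
move=> dD sk; split=> // x y Dxy; apply/negP => Dyx.
by move: (dD _ _ Dxy); rewrite connect1.
Qed.

Lemma orient_dag D : orient D -> is_dag D.
Proof.
case=> sk asym x y Dxy; apply/negP => /connectP [s pth lst].
case: (shortenP pth) lst => s' pth' uq _ lst.
have xy : x != y.
  by apply/negP => /eqP exy; move: (skel_sub sk Dxy); rewrite exy tree_irr.
case: s' pth' uq lst => [|z s'] pth' uq lst.
  by move: xy; rewrite /= in lst; rewrite lst eqxx.
case: s' pth' uq lst => [|z2 s'] pth' uq lst.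
  rewrite /= in lst; subst z; move: pth' => /= /andP [Dyx _].
  by move: (asym _ _ Dxy); rewrite Dyx.
have cyc : cycle D [:: y, z, z2 & s'].
  by rewrite /cycle rcons_path pth' -lst Dxy.
have cG : cycle G [:: y, z, z2 & s'] by apply: (sub_cycle _ cyc) => a b; apply: skel_sub.
by move: (tree_acyc uq); rewrite cG /= !ltnS leq0n => /(_ isT).
Qed.

Lemma orient_irr D x : orient D -> D x x = false.
Proof. by case=> sk _; apply/negP => /(skel_sub sk); rewrite tree_irr. Qed.

Lemma orient_rev D x y : orient D -> G x y -> D y x = ~~ D x y.
Proof.
case=> sk asym Gxy; move: Gxy; rewrite sk.
by case Dxy: (D x y) => /=; [move: (asym _ _ Dxy); case: (D y x)| ].
Qed.

Lemma no_tri a b c : G a b -> G b c -> G c a -> False.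
Proof.
move=> ab bc ca.
have ab' : a != b by apply/negP=> /eqP e; move: ab; rewrite e tree_irr.
have bc' : b != c by apply/negP=> /eqP e; move: bc; rewrite e tree_irr.
have ca' : c != a by apply/negP=> /eqP e; move: ca; rewrite e tree_irr.
have uq : uniq [:: a; b; c].
  by rewrite /= !inE negb_or ab' bc' eq_sym ca'.
have := tree_acyc uq (isT); by rewrite /cycle /= ab bc ca.
Qed.

End Basics.

Open Scope ring_scope.

Section Imset.
Variables (n : nat) (G : rel 'I_n).
Hypothesis tG : is_tree G.

Definition st (A : {set 'I_n}) : {set 'I_n} := if (1 < #|A|)%N then A else set0.
Definition stD (D : rel 'I_n) (z : 'I_n) := st (parents D z).

Lemma in_pa (D : rel 'I_n) (j i : 'I_n) : (j \in parents D i) = D j i.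
Proof. by rewrite /parents inE. Qed.

Lemma ci_uniq (D : rel 'I_n) (S : {set 'I_n}) (i j : 'I_n) : orient G D -> i \in S -> j \in S ->
  S \subset parents D i :|: [set i] -> S \subset parents D j :|: [set j] -> i = j.
Proof.
move=> [_ asym] iS jS /subsetP si /subsetP sj; apply/eqP; apply/negPn/negP => ij.
have := si _ jS; rewrite !inE ?in_pa eq_sym (negbTE ij) orbF => Dji.
have := sj _ iS; rewrite !inE ?in_pa (negbTE ij) orbF => Dij.
by move: (asym _ _ Dij); rewrite Dji.
Qed.

Lemma ci_sum (R : realFieldType) (D : rel 'I_n) (oD : orient G D) (S : imset_idx n) :
  char_imset R D S = \sum_(i in val S) ((val S \subset parents D i :|: [set i]) : nat)%:R.
Proof.
rewrite /char_imset ffunE; case: existsP => [[i /andP [iS sub]] | ne].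
  rewrite (bigD1 i) //= sub big1 ?addr0 // => j /andP [jS ji].
  case sj: (_ \subset _) => //; move: ji; by rewrite (ci_uniq oD jS iS sj sub) eqxx.
rewrite big1 // => j jS; case sj: (_ \subset _) => //; case: ne; exists j; by rewrite jS sj.
Qed.

Lemma sub_pa_st (D : rel 'I_n) (S : {set 'I_n}) (i : 'I_n) : (2 < #|S|)%N ->
  (S \subset parents D i :|: [set i]) = (S \subset st (parents D i) :|: [set i]).
Proof.
move=> S3; rewrite /st; case: ifP => // pa1.
apply/idP/idP => sub; last by move: sub; rewrite set0U => /subset_leq_card; rewrite cards1 => h; move: (leq_trans S3 h).
have := subset_leq_card sub; rewrite setUC cardsU1 => h.
have : (2 < (i \notin parents D i) + #|parents D i|)%N by apply: leq_trans h.
by move: pa1; case: (#|parents D i|) => [|[|k]] //; case: (_ \notin _).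
Qed.

Lemma ci_edge (D : rel 'I_n) (oD : orient G D) (a b : 'I_n) : a != b ->
  [exists i in [set a; b], [set a; b] \subset parents D i :|: [set i]] = G a b.
Proof.
move=> ab; case: oD => sk asym; rewrite sk.
apply/existsP/idP.
  move=> [i /andP [iS /subsetP sub]]; move: iS; rewrite !inE => /orP [] /eqP ei; subst i.
    have : b \in parents D a :|: [set a] by apply: sub; rewrite !inE eqxx orbT.
    by rewrite !inE ?in_pa (eq_sym b a) (negbTE ab) orbF => ->; rewrite orbT.
  have : a \in parents D b :|: [set b] by apply: sub; rewrite !inE eqxx.
  by rewrite !inE ?in_pa (negbTE ab) orbF => ->.
move=> /orP [] Dab.
  exists b; rewrite !inE eqxx orbT /=; apply/subsetP => x; rewrite !inE ?in_pa.
  by case/orP => /eqP ->; rewrite ?Dab ?eqxx ?orbT.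
exists a; rewrite !inE eqxx /=; apply/subsetP => x; rewrite !inE ?in_pa.
by case/orP => /eqP ->; rewrite ?Dab ?eqxx ?orbT.
Qed.

Lemma st_det (R : realFieldType) (D E : rel 'I_n) : orient G D -> orient G E ->
  (forall z, stD D z = stD E z) -> char_imset R D = char_imset R E.
Proof.
move=> oD oE eqst; apply/ffunP => S; rewrite !ffunE.
case: S => S /= S2.
case: (ltngtP #|S| 2) => [lt|S3|/eqP S2e]; first by move: lt; rewrite ltnS leqNgt S2.
  2:{
  have [a [b [ab ->]]] := cards2P _ S2e.
  by rewrite (ci_edge oD ab) (ci_edge oE ab). }
have -> : [exists i in S, S \subset parents D i :|: [set i]] =
          [exists i in S, S \subset parents E i :|: [set i]].
  apply: eq_existsb => i; rewrite !(sub_pa_st _ _ S3).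
  by have := eqst i; rewrite /stD => ->.
by [].
Qed.

Lemma pa_sub_nb (D : rel 'I_n) (z : 'I_n) : orient G D -> parents D z \subset [set u | G z u].
Proof.
case=> sk _; apply/subsetP => j; rewrite in_pa inE => Djz.
by rewrite (tree_sym tG) sk Djz.
Qed.

End Imset.

Close Scope ring_scope.
Open Scope ring_scope.

Section Mobius.
Variables (n : nat) (R : realFieldType).

Definition toggle (a : 'I_n) (T : {set 'I_n}) := if a \in T then T :\ a else a |: T.

Lemma toggleK a : involutive (toggle a).
Proof.
move=> T; case aT: (a \in T); rewrite /toggle aT.
  by rewrite !inE eqxx /= setD1K.
by rewrite !inE eqxx /= setU1K ?aT.
Qed.

Lemma toggle_inj a : injective (toggle a).
Proof. exact: inv_inj (toggleK a). Qed.

Lemma toggle_subA a (A T : {set 'I_n}) : a \in A -> (toggle a T \subset A) = (T \subset A).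
Proof.
move=> aA; rewrite /toggle; case: ifP => aT.
  by rewrite -{2}(setD1K aT) subUset sub1set aA.
by rewrite subUset sub1set aA.
Qed.

Lemma toggle_subU a (U T : {set 'I_n}) : a \notin U -> (U \subset toggle a T) = (U \subset T).
Proof.
move=> aU; rewrite /toggle; case: ifP => aT.
  by rewrite subsetD1 aU andbT.
by rewrite -{2}(setU1K (negbT aT)) subsetD1 aU andbT.
Qed.

Lemma toggle_sign a (U T : {set 'I_n}) : a \notin U ->
  (-1) ^+ #|toggle a T :\: U| = - (-1) ^+ #|T :\: U| :> R.
Proof.
move=> aU; rewrite /toggle; case: ifP => aT.
  have e : (T :\ a) :\: U = (T :\: U) :\ a.
    by apply/setP => x; rewrite !inE; case: (x == a); case: (x \in U).
  have aTU : a \in T :\: U by rewrite inE aU aT.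
  by rewrite e (cardsD1 a (T :\: U)) aTU add1n exprS mulN1r opprK.
have e : (a |: T) :\: U = a |: (T :\: U).
  apply/setP => x; rewrite !inE; case: (eqVneq x a) => [->|] //=.
  by rewrite (negbTE aU).
have aTU : a \notin T :\: U by rewrite inE aT andbF.
by rewrite e cardsU1 aTU add1n exprS mulN1r.
Qed.

Lemma mob_alt (A U : {set 'I_n}) : U \subset A ->
  \sum_(T : {set 'I_n} | (T \subset A) && (U \subset T)) (-1) ^+ #|T :\: U| = (U == A)%:R :> R.
Proof.
move=> UA; case: (eqVneq U A) => [-> | neq].
  rewrite (big_pred1 A); first by rewrite setDv cards0 expr0.
  by move=> T; rewrite /= eqEsubset.
have /subsetPn [a aA aU] : ~~ (A \subset U).
  by apply/negP => AU; move: neq; rewrite eqEsubset UA AU.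
set s := \sum_(T | _) _.
have : s = - s.
  rewrite {1}/s (reindex_inj (toggle_inj (a:=a))) /= -sumrN.
  apply: eq_big => T; first by rewrite toggle_subA // toggle_subU.
  by move=> _; rewrite toggle_sign.
by move=> h; apply/eqP; rewrite /=; lra.
Qed.

Definition mob (f : {set 'I_n} -> R) (T : {set 'I_n}) : R :=
  \sum_(U : {set 'I_n} | U \subset T) (-1) ^+ #|T :\: U| * f U.

Lemma mobK (f : {set 'I_n} -> R) (A : {set 'I_n}) : \sum_(T : {set 'I_n} | T \subset A) mob f T = f A.
Proof.
rewrite /mob (exchange_big_dep (fun U : {set 'I_n} => U \subset A)) /=; last first.
  by move=> T U TA UT; apply: subset_trans UT TA.
rewrite (eq_bigr (fun U => (U == A)%:R * f U)); last first.
  by move=> U UA; rewrite -big_distrl /= mob_alt.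
rewrite (bigD1 A) //= eqxx mul1r big1 ?addr0 // => U /andP [_ /negbTE ->].
by rewrite mul0r.
Qed.

Lemma mob_small (f : {set 'I_n} -> R) (T : {set 'I_n}) : (forall U : {set 'I_n}, (#|U| <= 1)%N -> f U = 0) -> (#|T| <= 1)%N -> mob f T = 0.
Proof.
move=> f0 T1; rewrite /mob big1 // => U UT; rewrite f0 ?mulr0 //.
by apply: leq_trans T1; apply: subset_leq_card.
Qed.

End Mobius.

Close Scope ring_scope.
Open Scope ring_scope.

Section SumIdx.
Variables (n : nat) (R : realFieldType).
Lemma sum_idx (F : {set 'I_n} -> R) :
  \sum_(S : imset_idx n) F (val S) = \sum_(S : {set 'I_n} | (1 < #|S|)%N) F S.
Proof.
symmetry; rewrite (reindex_omap (val : imset_idx n -> _) insub); last first.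
  by move=> S S1; rewrite insubT.
apply: eq_bigl=> -[S S1] /=; by rewrite insubT /= S1 eqxx.
Qed.
End SumIdx.

Section Cert.
Variables (n : nat) (G : rel 'I_n) (R : realFieldType).
Hypothesis tG : is_tree G.
Variable f : 'I_n -> {set 'I_n} -> R.
Hypothesis hf : forall z (U : {set 'I_n}), (#|U| <= 1)%N -> f z U = 0.

Definition nb (z : 'I_n) := [set u | G z u].
Definition om (z : 'I_n) (T : {set 'I_n}) : R := ((T \subset nb z) : nat)%:R * mob (f z) T.
Definition wcert : point R n :=
  [ffun S : imset_idx n => \sum_(z in val S) om z (val S :\ z)].

Lemma om_small z (T : {set 'I_n}) : (#|T| <= 1)%N -> om z T = 0.
Proof. by move=> T1; rewrite /om (@mob_small n R (f z) T) ?mulr0 // => U; apply: hf. Qed.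

Lemma cross (D : rel 'I_n) (oD : orient G D) (S : {set 'I_n}) z i : z \in S -> i \in S -> i != z ->
  S \subset parents D i :|: [set i] -> om z (S :\ z) = 0.
Proof.
move=> zS iS iz /subsetP sub.
rewrite /om; case nbz: (S :\ z \subset nb z); last by rewrite mul0r.
case: (leqP #|S :\ z| 1) => [s1|s2]; first by rewrite (@mob_small n R (f z)) ?mulr0 // => U; apply: hf.
have iSz : i \in S :\ z by rewrite !inE iz iS.
have : (0 < #|(S :\ z) :\ i|)%N.
  by move: s2; rewrite (cardsD1 i (S :\ z)) iSz.
move/card_gt0P => [t]; rewrite !inE => /and3P [ti tz tS].
have Dti : D t i by have := sub _ tS; rewrite !inE (negbTE ti) orbF.
have Dzi : D z i by have := sub _ zS; rewrite !inE eq_sym (negbTE iz) orbF.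
have Gzt : G z t by move/subsetP: nbz => /(_ t); rewrite !inE tz tS => /(_ isT).
case: oD => sk _.
have Gti : G t i by rewrite sk Dti.
have Giz : G i z by rewrite sk Dzi orbT.
by case: (no_tri tG Gzt Gti Giz).
Qed.

Lemma sub_paz (D : rel 'I_n) (S : {set 'I_n}) z : z \in S ->
  (S \subset parents D z :|: [set z]) = (S :\ z \subset parents D z).
Proof.
move=> zS; apply/subsetP/subsetP => h x.
  by rewrite !inE => /andP [xz xS]; have := h _ xS; rewrite !inE (negbTE xz) orbF.
case: (eqVneq x z) => [->|xz] xS; first by rewrite !inE eqxx orbT.
by rewrite inE h // !inE xz xS.
Qed.

Lemma dotp_cert (D : rel 'I_n) (oD : orient G D) :
  dotp wcert (char_imset R D) = \sum_z f z (parents D z).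
Proof.
rewrite /dotp.
have step1 : forall S : imset_idx n, wcert S * char_imset R D S =
   \sum_(z in val S) om z (val S :\ z) * ((val S \subset parents D z :|: [set z]) : nat)%:R.
  move=> S; rewrite ffunE (@ci_sum _ _ R _ oD) big_distrlr /=.
  apply: eq_bigr => z zS; rewrite (bigD1 z) //= big1 ?addr0 // => i /andP [iS iz].
  case sb: (_ \subset _); last by rewrite mulr0.
  by rewrite (cross oD zS iS iz sb) mul0r.
rewrite (eq_bigr _ (fun S _ => step1 S)) {step1}.
rewrite (sum_idx (fun S => \sum_(z in S) om z (S :\ z) * ((S \subset parents D z :|: [set z]) : nat)%:R)).
rewrite (exchange_big_dep xpredT) //=.
apply: eq_bigr => z _.
rewrite (eq_bigr (fun S => om z (S :\ z) * ((S :\ z \subset parents D z) : nat)%:R)); last first.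
  by move=> S /andP [_ zS]; rewrite sub_paz.
set h := fun T => om z T * ((T \subset parents D z) : nat)%:R.
have -> : \sum_(S : {set 'I_n} | (1 < #|S|)%N && (z \in S)) h (S :\ z) = \sum_(S : {set 'I_n} | z \in S) h (S :\ z).
  rewrite [RHS](bigID (fun S : {set 'I_n} => (1 < #|S|)%N)) /= [X in _ = _ + X]big1 ?addr0; last first.
    move=> S /andP [zS S1]; rewrite /h om_small ?mul0r //.
    by move: S1; rewrite -leqNgt (cardsD1 z S) zS add1n => /ltnW.
  by apply: eq_bigl => S; rewrite andbC.
have -> : \sum_(S : {set 'I_n} | z \in S) h (S :\ z) = \sum_(T : {set 'I_n} | z \notin T) h T.
  rewrite [RHS](reindex_inj (toggle_inj (a:=z))) /=.
  apply: eq_big => S; rewrite /toggle; case: ifP => zS //=.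
    by rewrite !inE eqxx.
  by rewrite !inE eqxx.
have -> : \sum_(T : {set 'I_n} | z \notin T) h T = \sum_(T : {set 'I_n} | T \subset parents D z) om z T.
  rewrite [LHS](bigID (fun T : {set 'I_n} => T \subset parents D z)) /=.
  rewrite [X in _ + X]big1 ?addr0; last by move=> T /andP [_ /negbTE np]; rewrite /h np mulr0.
  rewrite [RHS](bigID (fun T : {set 'I_n} => z \notin T)) /=.
  rewrite [X in _ = _ + X]big1 ?addr0; last first.
    move=> T /andP [/subsetP TP]; rewrite negbK => zT.
    by have := TP _ zT; rewrite in_pa (orient_irr tG _ oD).
  apply: eq_big => T; first by rewrite andbC.
  by move=> /andP [_ pp]; rewrite /h pp mulr1.
rewrite -(mobK (f z) (parents D z)); apply: eq_bigr => T TP.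
by rewrite /om (subset_trans TP (pa_sub_nb tG z oD)) mul1r.
Qed.

End Cert.

Close Scope ring_scope.
Open Scope ring_scope.

Section Box.
Variables (n : nat) (G : rel 'I_n) (R : realFieldType).
Hypothesis tG : is_tree G.
Variables (a b : 'I_n -> {set 'I_n}).

Definition bx (z : 'I_n) (A : {set 'I_n}) : R := ((st A == a z) || (st A == b z) : nat)%:R.
Definition fbox z A := bx z A - bx z set0.

Lemma fbox0 z (U : {set 'I_n}) : (#|U| <= 1)%N -> fbox z U = 0.
Proof. by move=> U1; rewrite /fbox /bx /st cards0 /= ltnNge U1 /= subrr. Qed.

Definition wbox := wcert G fbox.
Definition Kbox := \sum_(z : 'I_n) bx z set0.
Definition Mbox := \sum_(z : 'I_n) (1 : R) - Kbox.

Lemma box_val (D : rel 'I_n) (oD : orient G D) :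
  dotp wbox (char_imset R D) = \sum_z bx z (parents D z) - Kbox.
Proof. by rewrite /wbox (dotp_cert tG fbox0 oD) /fbox sumrB. Qed.

Definition inbox (D : rel 'I_n) := [forall z, (stD D z == a z) || (stD D z == b z)].

Lemma box_max (D : rel 'I_n) (oD : orient G D) : inbox D -> dotp wbox (char_imset R D) = Mbox.
Proof.
move=> /forallP ib; rewrite (box_val oD) /Mbox; congr (_ - _).
by apply: eq_bigr => z _; have := ib z; rewrite /stD /bx => h; rewrite h.
Qed.

Lemma box_lt (D : rel 'I_n) (oD : orient G D) : ~~ inbox D -> dotp wbox (char_imset R D) < Mbox.
Proof.
move=> /forallPn [z0 nz]; rewrite (box_val oD) /Mbox ltrBlDr subrK.
rewrite (bigD1 z0) //= [X in _ < X](bigD1 z0) //=.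
have -> : bx z0 (parents D z0) = 0 by rewrite /bx; move: nz; rewrite /stD => /negbTE ->.
rewrite add0r ltr_pwDl ?ltr01 //; apply: ler_sum => z _.
by rewrite /bx; case: (_ || _).
Qed.

Lemma box_le (D : rel 'I_n) (oD : orient G D) : dotp wbox (char_imset R D) <= Mbox.
Proof.
case ib: (inbox D); first by rewrite box_max.
by apply/ltW/box_lt; rewrite ?ib.
Qed.

End Box.

Section Vertices.
Variables (n : nat) (G : rel 'I_n) (R : realFieldType).
Hypothesis tG : is_tree G.

Lemma cim_vertex (D : rel 'I_n) : is_dag D -> has_skeleton D G ->
  poly_vertex (@CIM_pts R n G) (char_imset R D).
Proof.
move=> dD sk; have oD := dag_orient dD sk.
split; first by exists D.
exists (wbox G R (stD D) (stD D)) => y [E [dE [skE ->]]] ne.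
have oE := dag_orient dE skE.
rewrite (@box_max _ _ R tG (stD D) (stD D) _ oD); last by apply/forallP => z; rewrite eqxx.
apply: (box_lt R tG oE); apply/negP => /forallP ib; apply: ne.
apply: (st_det R oE oD) => z; by have := ib z; rewrite orbb => /eqP.
Qed.

Lemma box_edge (D1 D2 : rel 'I_n) : is_dag D1 -> has_skeleton D1 G ->
  is_dag D2 -> has_skeleton D2 G -> char_imset R D1 <> char_imset R D2 ->
  (forall E, is_dag E -> has_skeleton E G -> inbox (stD D1) (stD D2) E ->
     char_imset R E = char_imset R D1 \/ char_imset R E = char_imset R D2) ->
  poly_edge (@CIM_pts R n G) (char_imset R D1) (char_imset R D2).
Proof.
move=> d1 s1 d2 s2 ne hbox.
have o1 := dag_orient d1 s1; have o2 := dag_orient d2 s2.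
split; first exact: cim_vertex.
split; first exact: cim_vertex.
split => //.
exists (wbox G R (stD D1) (stD D2)).
have ib1 : inbox (stD D1) (stD D2) D1 by apply/forallP => z; rewrite eqxx.
have ib2 : inbox (stD D1) (stD D2) D2 by apply/forallP => z; rewrite eqxx orbT.
rewrite (box_max R tG o1 ib1) (box_max R tG o2 ib2).
split => //; split.
  by move=> y [E [dE [skE ->]]]; apply: (@box_le _ _ R tG (stD D1) (stD D2) _ (dag_orient dE skE)).
move=> y [E [dE [skE ->]]] eqv.
have oE := dag_orient dE skE.
case ibE: (inbox (stD D1) (stD D2) E); last first.
  by have := @box_lt _ _ R tG (stD D1) (stD D2) _ oE (negbT ibE); rewrite eqv ltxx.
case: (hbox E dE skE ibE) => ->.
  by exists 1; rewrite ler01 lexx; split => //; apply/ffunP => S; rewrite [in RHS]ffunE mul1r subrr mul0r addr0.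
by exists 0; rewrite lexx ler01; split => //; apply/ffunP => S; rewrite [in RHS]ffunE mul0r subr0 mul1r add0r.
Qed.

End Vertices.

Close Scope ring_scope.
Open Scope ring_scope.

Section Walks.
Variables (n : nat) (R : realFieldType) (V : point R n -> Prop).

Lemma walk0 u : has_walk V u u 0.
Proof. by exists (fun _ => u). Qed.

Lemma walk1 u v : poly_edge V u v -> has_walk V u v 1.
Proof.
move=> e; exists (fun i => if i is 0%N then u else v); split => //; split => //.
by case=> // _; rewrite /=.
Qed.

Lemma walk_cat u y v k1 k2 : has_walk V u y k1 -> has_walk V y v k2 ->
  has_walk V u v (k1 + k2).
Proof.
move=> [f1 [f10 [f1k h1]]] [f2 [f20 [f2k h2]]].
exists (fun i => if (i <= k1)%N then f1 i else f2 (i - k1)%N); split.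
  by rewrite leq0n.
split.
  case: (posnP k2) => [k0|k2p]; first by subst k2; rewrite addn0 leqnn f1k -f2k f20.
  by rewrite leqNgt -{1}(addn0 k1) ltn_add2l k2p /= addKn.
move=> i ik; case: (ltnP i k1) => [lt|ge].
  by rewrite (ltnW lt); apply: h1.
case: (eqVneq i k1) => [ei|ne].
  subst i; rewrite leqnn subSn // subnn f1k -f20; apply: h2.
  by rewrite -(ltn_add2l k1) addn0.
have lt : (k1 < i)%N by rewrite ltn_neqAle eq_sym ne ge.
rewrite leqNgt lt /= (subSn ge); apply: h2.
by rewrite -(ltn_add2l k1) subnKC.
Qed.

End Walks.

Section Upper.
Variables (n : nat) (G : rel 'I_n) (R : realFieldType).
Hypothesis tG : is_tree G.

Notation V := (@CIM_pts R n G).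

Definition Xd (D1 D2 : rel 'I_n) := [set z | stD D1 z != stD D2 z].

Lemma Xd0 D1 D2 : orient G D1 -> orient G D2 -> #|Xd D1 D2| = 0%N ->
  char_imset R D1 = char_imset R D2.
Proof.
move=> o1 o2 /eqP; rewrite cards_eq0 => /eqP X0; apply: (st_det R o1 o2) => z.
apply/eqP; apply/negPn/negP => nz.
have : z \in Xd D1 D2 by rewrite inE.
by rewrite X0 inE.
Qed.

Lemma walk_ub N : forall D1 D2, is_dag D1 -> has_skeleton D1 G ->
  is_dag D2 -> has_skeleton D2 G -> (#|Xd D1 D2| <= N)%N ->
  exists k, has_walk V (char_imset R D1) (char_imset R D2) k /\ (k <= #|Xd D1 D2|)%N.
Proof.
elim: N => [|N IH] D1 D2 d1 s1 d2 s2 XN.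
  exists 0%N; split => //.
  rewrite (Xd0 (dag_orient d1 s1) (dag_orient d2 s2)); first exact: walk0.
  by apply/eqP; rewrite -leqn0.
have o1 := dag_orient d1 s1; have o2 := dag_orient d2 s2.
case: (classic (exists E, is_dag E /\ has_skeleton E G /\ inbox (stD D1) (stD D2) E /\
         char_imset R E <> char_imset R D1 /\ char_imset R E <> char_imset R D2)).
  move=> [E [dE [sE [/forallP ib [n1 n2]]]]].
  have oE := dag_orient dE sE.
  have sub1 : Xd D1 E \subset Xd D1 D2.
    apply/subsetP => z; rewrite !inE; have := ib z.
    by case/orP => /eqP ->; rewrite ?eqxx // eq_sym.
  have sub2 : Xd E D2 \subset Xd D1 D2.
    apply/subsetP => z; rewrite !inE; have := ib z.
    by case/orP => /eqP ->; rewrite ?eqxx.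
  have dis : Xd D1 E :&: Xd E D2 = set0.
    apply/setP => z; rewrite !inE; have := ib z.
    by case/orP => /eqP ->; rewrite ?eqxx ?andbF.
  have card : (#|Xd D1 E| + #|Xd E D2| <= #|Xd D1 D2|)%N.
    have := cardsU (Xd D1 E) (Xd E D2); rewrite dis cards0 subn0 => <-.
    by apply: subset_leq_card; rewrite subUset sub1 sub2.
  have pos1 : (0 < #|Xd D1 E|)%N.
    rewrite lt0n; apply/negP => /eqP h; apply: n1; symmetry.
    exact: Xd0 o1 oE h.
  have pos2 : (0 < #|Xd E D2|)%N.
    rewrite lt0n; apply/negP => /eqP h; apply: n2.
    exact: Xd0 oE o2 h.
  have [k1 [w1 k1l]] : exists k, has_walk V (char_imset R D1) (char_imset R E) k /\ (k <= #|Xd D1 E|)%N.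
    apply: IH => //; rewrite -ltnS; apply: leq_trans XN.
    by apply: leq_trans card; rewrite -addn1 leq_add2l.
  have [k2 [w2 k2l]] : exists k, has_walk V (char_imset R E) (char_imset R D2) k /\ (k <= #|Xd E D2|)%N.
    apply: IH => //; rewrite -ltnS; apply: leq_trans XN.
    by apply: leq_trans card; rewrite -add1n leq_add2r.
  exists (k1 + k2)%N; split; first exact: walk_cat w1 w2.
  by apply: leq_trans card; apply: leq_add.
move=> nex.
case: (classic (char_imset R D1 = char_imset R D2)) => [eq|ne].
  by exists 0%N; split => //; rewrite eq; apply: walk0.
exists 1%N; split.
  apply: walk1; apply: (box_edge tG) => // E dE sE ib.
  case: (classic (char_imset R E = char_imset R D1)) => [h|h1]; first by left.
  case: (classic (char_imset R E = char_imset R D2)) => [h|h2]; first by right.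
  by case: nex; exists E.
rewrite lt0n; apply/negP => /eqP h; apply: ne; exact: Xd0 o1 o2 h.
Qed.

Lemma Xd_internal D1 D2 : orient G D1 -> orient G D2 ->
  (#|Xd D1 D2| <= num_internal G)%N.
Proof.
move=> o1 o2; apply: subset_leq_card; apply/subsetP => z; rewrite !inE.
have key : forall D, orient G D -> stD D z != set0 -> (2 <= #|[set u | G z u]|)%N.
  move=> D oD; rewrite /stD /st; case: ifP => [h _|]; last by rewrite eqxx.
  by apply: leq_trans h _; apply: subset_leq_card; apply: (pa_sub_nb tG z oD).
case: (eqVneq (stD D1 z) set0) => [e1|n1]; last by move=> _; exact: key o1 n1.
case: (eqVneq (stD D2 z) set0) => [e2|n2]; last by move=> _; exact: key o2 n2.
by rewrite e1 e2 eqxx.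
Qed.

End Upper.

Close Scope ring_scope.

Section Seqs.
Variables (a b : nat -> bool).

Definition phi (q : nat -> bool) i : nat := q i && ~~ q i.+1.
Definition cnt (q : nat -> bool) k m := \sum_(k <= i < m) phi q i.
Definition chg (q : nat -> bool) k m := \sum_(k <= i < m) ((q i != q i.+1) : nat).

Lemma tele q k m : (k <= m)%N -> 2 * cnt q k m + q m = chg q k m + q k.
Proof.
rewrite /cnt /chg; elim: m => [|m IH] km.
  by move: km; rewrite leqn0 => /eqP ->; rewrite !big_geq.
case: (eqVneq k m.+1) => [->|ne]; first by rewrite !big_geq.
have km' : (k <= m)%N by move: km ne; rewrite leq_eqVlt => /orP [/eqP ->|]; rewrite ?eqxx.
rewrite !big_nat_recr //=; have := IH km'.
rewrite /phi; case: (q m); case: (q m.+1) => /=; lia.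
Qed.

Lemma chg_flip k m : (k < m)%N -> a k = b k -> a m = b m ->
  (forall j, (k < j < m)%N -> b j = ~~ a j) -> (chg b k m <= chg a k m + 2)%N.
Proof.
move=> km ak am fl; rewrite /chg.
case: (eqVneq m k.+1) => [em|ne].
  by subst m; rewrite !big_nat1 ak am; lia.
have k1m : (k.+1 < m)%N by rewrite ltn_neqAle eq_sym ne km.
case: m km am fl ne k1m => [//|m'] km am fl ne k1m.
have k1m' : (k.+1 <= m')%N by rewrite -ltnS.
rewrite !(big_ltn km) !big_nat_recr //=.
have -> : \sum_(k.+1 <= i < m') ((b i != b i.+1) : nat) =
          \sum_(k.+1 <= i < m') ((a i != a i.+1) : nat).
  rewrite !big_nat; apply: eq_bigr => i /andP [ki im].
  rewrite (fl i); last by rewrite ki (ltn_trans im).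
  rewrite (fl i.+1); last by rewrite (ltn_trans ki (ltnSn _)) /= ltnS.
  by case: (a i); case: (a i.+1).
have h1 := leq_b1 (b k != b k.+1); have h2 := leq_b1 (b m' != b m'.+1).
lia.
Qed.

Lemma jump k m : (k < m)%N -> a k = b k -> a m = b m ->
  (forall j, (k < j < m)%N -> b j = ~~ a j) -> (cnt b k m <= cnt a k m + 1)%N.
Proof.
move=> km ak am fl; have := chg_flip km ak am fl.
have := tele b (ltnW km); have := tele a (ltnW km).
rewrite ak am; lia.
Qed.

Variable N : nat.
Definition Fk k := (cnt b 0 k + cnt a k N)%N.

Lemma Fk_jump k m : (k < m)%N -> (m <= N)%N -> a k = b k -> a m = b m ->
  (forall j, (k < j < m)%N -> a j != b j) -> (Fk m <= Fk k + 1)%N.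
Proof.
move=> km mN ak am fl.
have fl' : forall j, (k < j < m)%N -> b j = ~~ a j.
  by move=> j /fl; case: (a j); case: (b j).
have := jump km ak am fl'.
have e1 : cnt b 0 m = (cnt b 0 k + cnt b k m)%N.
  by rewrite /cnt -big_cat_nat // ltnW.
have e2 : cnt a k N = (cnt a k m + cnt a m N)%N.
  by rewrite /cnt -big_cat_nat // ltnW.
rewrite /Fk e1 e2; lia.
Qed.

Lemma ivt : a 0 = b 0 -> a N = b N -> (Fk 0 + 2 <= Fk N)%N ->
  exists k, [/\ (k <= N)%N, a k = b k & (Fk 0 < Fk k < Fk N)%N].
Proof.
move=> a0 aN big.
pose P k := [&& (k <= N)%N, a k == b k & (Fk 0 < Fk k)%N].
have exP : exists k, P k by exists N; rewrite /P leqnn aN eqxx /=; lia.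
case: (ex_minnP exP) => k1 /and3P [k1N /eqP ak1 lt1] min1.
have k1p : (0 < k1)%N by case: k1 lt1 {min1 k1N ak1} => //; rewrite ltnn.
pose Q j := (j < k1)%N && (a j == b j).
have exQ : exists j, Q j by exists 0%N; rewrite /Q k1p a0 eqxx.
have ubQ : forall j, Q j -> (j <= k1)%N by move=> j /andP [/ltnW].
case: (ex_maxnP exQ ubQ) => k0 /andP [k0k1 /eqP ak0] max0.
have nP0 : ~~ P k0.
  apply/negP => Pk0; have := min1 _ Pk0; by rewrite leqNgt k0k1.
have le0 : (Fk k0 <= Fk 0)%N.
  move: nP0; rewrite /P ak0 eqxx (leq_trans (ltnW k0k1) k1N) /=; lia.
have jm := Fk_jump k0k1 k1N ak0 ak1.
have := jm _ => /(_ _).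
have hj : forall j, (k0 < j < k1)%N -> a j != b j.
  move=> j /andP [k0j jk1]; apply/negP => /eqP e.
  have : Q j by rewrite /Q jk1 e eqxx.
  by move/max0; rewrite leqNgt k0j.
move=> _; have := jm hj => le1.
exists k1; split => //; apply/andP; split => //; lia.
Qed.

End Seqs.

Open Scope ring_scope.

Section PathPhi.
Variables (n : nat) (G : rel 'I_n) (R : realFieldType).
Hypothesis tG : is_tree G.
Variables (x : 'I_n) (s : seq 'I_n) (p : nat).
Hypotheses (uq : uniq (x :: s)) (pth : path G x s) (sz : size s = p).

Definition Pv j := nth x (x :: s) j.

Lemma P_edge j : (j < p)%N -> G (Pv j) (Pv j.+1).
Proof. move=> jp; move/(pathP x): pth => /(_ j); rewrite sz => /(_ jp). by []. Qed.

Lemma P_inj i j : (i <= p)%N -> (j <= p)%N -> Pv i = Pv j -> i = j.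
Proof.
move=> ip jp e; apply/eqP; rewrite -(nth_uniq x _ _ uq) /= ?sz ?ltnS //.
by rewrite /Pv in e; rewrite e.
Qed.

Lemma P_neq i j : (i <= p)%N -> (j <= p)%N -> i != j -> Pv i != Pv j.
Proof. by move=> ip jp ij; apply/eqP => /(P_inj ip jp) e; move: ij; rewrite e eqxx. Qed.

Definition ap (D : rel 'I_n) j : bool :=
  if j == 0%N then false else if (j <= p)%N then D (Pv j.-1) (Pv j) else true.

Definition Phin D := cnt (ap D) 0 p.+1.

Definition Tset i := [set Pv i.-1; Pv i; Pv i.+1].

Definition PhiR (y : point R n) : R :=
  \sum_(0 <= i < p.+1) (if (0 < i < p)%N then oapp (fun S : imset_idx n => y S) 0 (insub (Tset i)) else 0).

Lemma T_card i : (0 < i < p)%N -> (1 < #|Tset i|)%N.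
Proof.
move=> /andP [i0 ip].
have : [set Pv i.-1; Pv i] \subset Tset i.
  by apply/subsetP => y; rewrite !inE => /orP [] ->; rewrite ?orbT.
move/subset_leq_card; rewrite cards2 P_neq //.
- by rewrite (leq_trans (leq_pred _)) // ltnW.
- by rewrite ltnW.
- by apply/eqP; lia.
Qed.

Lemma phi_exists (D : rel 'I_n) (oD : orient G D) i : (0 < i < p)%N ->
  [exists j in Tset i, Tset i \subset parents D j :|: [set j]] =
  D (Pv i.-1) (Pv i) && D (Pv i.+1) (Pv i).
Proof.
move=> /andP [i0 ip].
have ip' : (i <= p)%N by rewrite ltnW.
have i1p : (i.-1 <= p)%N by rewrite (leq_trans (leq_pred _)).
have i2p : (i.+1 <= p)%N by [].
have n01 : Pv i.-1 != Pv i by rewrite P_neq //; apply/eqP; lia.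
have n12 : Pv i != Pv i.+1 by rewrite P_neq //; apply/eqP; lia.
have n02 : Pv i.-1 != Pv i.+1 by rewrite P_neq //; apply/eqP; lia.
have G01 : G (Pv i.-1) (Pv i).
  have := @P_edge i.-1; rewrite prednK //; apply; lia.
have G12 : G (Pv i) (Pv i.+1) by apply: P_edge.
case: oD => sk asym.
apply/existsP/idP.
  move=> [j /andP [jT /subsetP sub]]; move: jT; rewrite !inE; case/orP; [case/orP|]; move/eqP => ej; subst j.
  - have : Pv i.+1 \in parents D (Pv i.-1) :|: [set Pv i.-1] by apply: sub; rewrite !inE eqxx !orbT.
    rewrite !inE eq_sym (negbTE n02) orbF => D20.
    have G20 : G (Pv i.+1) (Pv i.-1) by rewrite sk D20.
    by case: (no_tri tG G01 G12 G20).
  - have h0 : Pv i.-1 \in parents D (Pv i) :|: [set Pv i] by apply: sub; rewrite !inE eqxx.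
    have h2 : Pv i.+1 \in parents D (Pv i) :|: [set Pv i] by apply: sub; rewrite !inE eqxx !orbT.
    move: h0 h2; rewrite !inE (negbTE n01) (eq_sym _ (Pv i)) (negbTE n12) !orbF => -> ->.
    by [].
  - have : Pv i.-1 \in parents D (Pv i.+1) :|: [set Pv i.+1] by apply: sub; rewrite !inE eqxx.
    rewrite !inE (negbTE n02) orbF => D02.
    have G20 : G (Pv i.+1) (Pv i.-1) by rewrite sk D02 orbT.
    by case: (no_tri tG G01 G12 G20).
move=> /andP [D01 D21]; exists (Pv i); rewrite !inE eqxx orbT /=.
apply/subsetP => y; rewrite !inE; case/orP; [case/orP|]; move/eqP => ->; rewrite ?eqxx ?orbT //.
  by rewrite D01.
by rewrite D21.
Qed.

Lemma phi_term (D : rel 'I_n) (oD : orient G D) i : (0 < i < p)%N ->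
  oapp (fun S : imset_idx n => char_imset R D S) 0 (insub (Tset i)) = (phi (ap D) i)%:R.
Proof.
move=> ip; rewrite insubT; first exact: T_card.
move=> Ti /=; rewrite ffunE /= (phi_exists oD ip).
case/andP: ip => i0 ip.
have G12 : G (Pv i) (Pv i.+1) by apply: P_edge.
rewrite /phi /ap; have -> : (i == 0%N) = false by apply/eqP; lia.
rewrite /= (ltnW ip) ip /= (orient_rev oD G12).
by case: (_ && _).
Qed.

Lemma PhiR_c (D : rel 'I_n) (oD : orient G D) : PhiR (char_imset R D) = (Phin D)%:R.
Proof.
rewrite /PhiR /Phin /cnt natr_sum; apply: eq_big_nat => i /andP [_ ip].
case: ifP => [h|h]; first exact: phi_term.
rewrite /phi /ap; case: (eqVneq i 0%N) => [->|i0] //=.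
have pi : (p <= i)%N by move: h; rewrite lt0n i0 /= => /negbT; rewrite -leqNgt.
have ep : i = p by apply/eqP; rewrite eqn_leq pi -ltnS ip.
by subst i; rewrite ltnn /= andbF.
Qed.


Section Split.
Variables (D1 D2 : rel 'I_n) (k : nat).
Hypotheses (o1 : orient G D1) (o2 : orient G D2) (k0 : (0 < k)%N) (kp : (k <= p)%N)
  (agr : ap D1 k = ap D2 k).

Definition Gc : rel 'I_n := fun u v => G u v && ~~ (((u == Pv k.-1) && (v == Pv k)) || ((u == Pv k) && (v == Pv k.-1))).
Definition Ls y := connect Gc (Pv k.-1) y.

Lemma Guv0 : G (Pv k.-1) (Pv k).
Proof. have := @P_edge k.-1; rewrite prednK //; apply; lia. Qed.

Lemma agr1 : D1 (Pv k.-1) (Pv k) = D2 (Pv k.-1) (Pv k).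
Proof.
move: agr; rewrite /ap; have -> : (k == 0%N) = false by apply/eqP; lia.
by rewrite kp.
Qed.

Lemma agr2 : D1 (Pv k) (Pv k.-1) = D2 (Pv k) (Pv k.-1).
Proof. by rewrite (orient_rev o1 Guv0) (orient_rev o2 Guv0) agr1. Qed.

Lemma Gc_sym u v : Gc u v = Gc v u.
Proof.
rewrite /Gc /= (tree_sym tG); case: (u == Pv k.-1); case: (u == Pv k);
  by case: (v == Pv k.-1); case: (v == Pv k); rewrite /= ?andbF ?andbT ?orbF.
Qed.

Lemma Ls_edge u v : Gc u v -> Ls u = Ls v.
Proof.
move=> e; rewrite /Ls; apply/idP/idP => h; first exact: connect_trans h (connect1 e).
by rewrite Gc_sym in e; exact: connect_trans h (connect1 e).
Qed.

Lemma agree u v : G u v -> Ls u != Ls v -> D1 u v = D2 u v.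
Proof.
move=> Guv ne; have : ~~ Gc u v by apply/negP => /Ls_edge e; rewrite e eqxx in ne.
rewrite /Gc /= Guv /= negbK => /orP [] /andP [/eqP -> /eqP ->]; [exact: agr1 | exact: agr2].
Qed.

Lemma side_left_aux j : (j < k)%N -> Ls (Pv j).
Proof.
move=> jk; have : (k.-1 - j + j = k.-1)%N by lia.
move: (k.-1 - j)%N => d; elim: d j jk => [|d IH] j jk e.
  by rewrite add0n in e; rewrite e; exact: connect0.
have jk1 : (j.+1 < k)%N by lia.
rewrite (Ls_edge (v:=Pv j.+1)); first by apply: IH => //; lia.
have n1 : Pv j != Pv k.-1 by apply: P_neq; lia.
have n2 : Pv j != Pv k by apply: P_neq; lia.
by rewrite /Gc /= P_edge ?(negbTE n1) ?(negbTE n2) //; lia.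
Qed.

Lemma not_Lk : ~~ Ls (Pv k).
Proof.
apply/negP => /connectP [s1 pth1 lst].
case: (shortenP pth1) lst => s' pth' uq' _ lst.
have nkk : Pv k.-1 != Pv k by apply: P_neq; lia.
case: s' pth' uq' lst => [|z s''] pth' uq' lst.
  by move: nkk; rewrite /= in lst; rewrite lst eqxx.
case: s'' pth' uq' lst => [|z2 s3] pth' uq' lst.
  rewrite /= in lst; subst z; move: pth' => /= /andP []; rewrite /Gc.
  by rewrite !eqxx /= andbF.
have cyc : cycle G [:: Pv k.-1, z, z2 & s3].
  rewrite /cycle rcons_path -lst (tree_sym tG) Guv0 andbT.
  by apply: (sub_path _ pth') => a b; rewrite /Gc => /andP [].
by move: (tree_acyc tG uq'); rewrite cyc /= !ltnS leq0n => /(_ isT).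
Qed.

Lemma side_right_aux j : (k <= j <= p)%N -> ~~ Ls (Pv j).
Proof.
elim: j => [|j IH] /andP [kj jp]; first by lia.
case: (eqVneq j.+1 k) => [ek|ne]; first by rewrite ek; exact: not_Lk.
have kj' : (k <= j)%N by lia.
rewrite -(Ls_edge (u:=Pv j)); first by apply: IH; lia.
have n1 : Pv j != Pv k.-1 by apply: P_neq; lia.
have n2 : Pv j.+1 != Pv k.-1 by apply: P_neq; lia.
by rewrite /Gc /= P_edge ?(negbTE n1) ?(negbTE n2) ?andbF //; lia.
Qed.

Definition mix (A B : rel 'I_n) : rel 'I_n := fun u v => if Ls u then A u v else B u v.

Section Mix.
Variables (A B : rel 'I_n).
Hypotheses (oA : orient G A) (oB : orient G B)
  (hAB : forall u v, G u v -> Ls u != Ls v -> A u v = B u v).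

Lemma mix_alt u v : mix A B u v = if Ls v then A u v else B u v.
Proof.
rewrite /mix; case: oA => skA _; case: oB => skB _.
case Lu: (Ls u); case Lv: (Ls v) => //.
  case Guv: (G u v); first by apply: hAB; rewrite ?Lu ?Lv.
  have hA : A u v = false by apply/negbTE/negP => h; move: Guv; rewrite skA h.
  have hB : B u v = false by apply/negbTE/negP => h; move: Guv; rewrite skB h.
  by rewrite hA hB.
case Guv: (G u v); first by symmetry; apply: hAB; rewrite ?Lu ?Lv.
have hA : A u v = false by apply/negbTE/negP => h; move: Guv; rewrite skA h.
have hB : B u v = false by apply/negbTE/negP => h; move: Guv; rewrite skB h.
by rewrite hA hB.
Qed.

Lemma mix_pa z : parents (mix A B) z = if Ls z then parents A z else parents B z.
Proof. by apply/setP => j; rewrite !inE mix_alt; case: (Ls z); rewrite inE. Qed.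

Lemma mix_orient : orient G (mix A B).
Proof.
have [skA asA] := oA; have [skB asB] := oB; split.
  by move=> u v; rewrite (mix_alt v u) /mix; case: (Ls u); [apply: skA | apply: skB].
move=> u v; rewrite (mix_alt v u) /mix; case: (Ls u); [apply: asA | apply: asB].
Qed.

Lemma ap_mix j : ap (mix A B) j = if (j <= k)%N then ap A j else ap B j.
Proof.
rewrite /ap; case: (eqVneq j 0%N) => [->|j0]; first by case: (0 <= k)%N.
rewrite /=.
case: (leqP j p) => jp; last by case: (leqP j k) => //; lia.
rewrite /mix; case: (leqP j k) => jk.
  have -> : Ls (Pv j.-1) by apply: side_left_aux; lia.
  by [].
by rewrite ifF //; apply/negbTE/side_right_aux; lia.
Qed.

End Mix.

Lemma agree21 u v : G u v -> Ls u != Ls v -> D2 u v = D1 u v.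
Proof. by move=> g l; rewrite (agree g l). Qed.

Lemma orient3 : orient G (mix D2 D1).
Proof. exact: mix_orient o2 o1 agree21. Qed.

Lemma orient4 : orient G (mix D1 D2).
Proof. exact: mix_orient o1 o2 agree. Qed.

Lemma sum34 (S : imset_idx n) :
  char_imset R (mix D2 D1) S + char_imset R (mix D1 D2) S =
  char_imset R D1 S + char_imset R D2 S.
Proof.
rewrite (ci_sum R orient3) (ci_sum R orient4) (ci_sum R o1) (ci_sum R o2) -!big_split /=.
apply: eq_bigr => i _; rewrite (mix_pa o2 o1 agree21) (mix_pa o1 o2 agree).
by case: (Ls i) => //; rewrite addrC.
Qed.

Lemma Phin_mix : Phin (mix D2 D1) = Fk (ap D1) (ap D2) p.+1 k.
Proof.
rewrite /Phin /Fk /cnt (@big_cat_nat _ _ _ k) //=; last by lia.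
congr (_ + _)%N; apply: eq_big_nat => i /andP [ki ik]; rewrite /phi !(ap_mix D2 D1).
  by rewrite (ltnW ik) ik.
have -> : (i.+1 <= k)%N = false by apply/negbTE; rewrite -ltnNge ltnS.
case: (leqP i k) => ik' //.
have ei : i = k by apply/eqP; rewrite eqn_leq ik' ki.
by rewrite ei agr.
Qed.

End Split.

Definition is01 (y : point R n) := forall S, y S = 0 \/ y S = 1.

Lemma ci01 D : is01 (char_imset R D).
Proof. by move=> S; rewrite ffunE; case: ifP; [right|left]. Qed.

Lemma seg01 (u v y : point R n) : is01 u -> is01 v -> is01 y -> u <> v ->
  in_segment u v y -> y = u \/ y = v.
Proof.
move=> hu hv hy ne [t [/andP [t0 t1] ey]].
have [S0 nS] : exists S, u S != v S.
  case: (boolP [exists S, u S != v S]) => [/existsP //| /existsPn h].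
  case: ne; apply/ffunP => S; by apply/eqP; have := h S; rewrite negbK.
have yS : y S0 = t * u S0 + (1 - t) * v S0 by rewrite ey ffunE.
have : t = 1 \/ t = 0.
  case: (hu S0) => eu; case: (hv S0) => ev; case: (hy S0) => ey0;
  rewrite eu ev ey0 in yS nS; (try by rewrite eqxx in nS); (try by left; lra); by right; lra.
case=> ht; [left|right]; apply/ffunP => S; rewrite ey ffunE ht.
  by rewrite mul1r subrr mul0r addr0.
by rewrite mul0r add0r subr0 mul1r.
Qed.

Lemma dotpD (w y1 y2 y3 y4 : point R n) : (forall S, y1 S + y2 S = y3 S + y4 S) ->
  dotp w y1 + dotp w y2 = dotp w y3 + dotp w y4.
Proof. by move=> h; rewrite /dotp -!big_split; apply: eq_bigr => S _ /=; rewrite -!mulrDr h. Qed.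

Lemma edge_phi u v : poly_edge (@CIM_pts R n G) u v -> PhiR v <= PhiR u + 1.
Proof.
move=> [[[D1 [d1 [s1 eu]]] _] [[[D2 [d2 [s2 ev]]] _] [ne [w [eqw [le sg]]]]]]; subst u v.
have o1 := dag_orient d1 s1; have o2 := dag_orient d2 s2.
rewrite !PhiR_c // natr1 ler_nat leqNgt; apply/negP => big.
have a0 : ap D1 0 = ap D2 0 by [].
have aN : ap D1 p.+1 = ap D2 p.+1 by rewrite /ap /= ltnn.
have F0 : Fk (ap D1) (ap D2) p.+1 0 = Phin D1 by rewrite /Fk /cnt big_geq.
have FN : Fk (ap D1) (ap D2) p.+1 p.+1 = Phin D2.
  by rewrite /Fk /cnt [X in (_ + X)%N]big_geq // addn0.
have [k [kN ak /andP [lo hi]]] := ivt a0 aN (ltac:(rewrite F0 FN; lia)).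
have k0 : (0 < k)%N by rewrite lt0n; apply/negP => /eqP e; subst k; rewrite ltnn in lo.
have kp : (k <= p)%N.
  by rewrite -ltnS ltn_neqAle kN andbT; apply/negP => /eqP e; subst k; rewrite ltnn in hi.
have o3 := orient3 o1 o2 k0 kp ak.
have o4 := orient4 o1 o2 k0 kp ak.
have hs := sum34 o1 o2 k0 kp ak.
have d3 : is_dag (mix k D2 D1) := orient_dag tG o3.
have d4 : is_dag (mix k D1 D2) := orient_dag tG o4.
have V3 : @CIM_pts R n G (char_imset R (mix k D2 D1)).
  by exists (mix k D2 D1); split => //; split => //; case: o3.
have V4 : @CIM_pts R n G (char_imset R (mix k D1 D2)).
  by exists (mix k D1 D2); split => //; split => //; case: o4.
have l3 := le _ V3; have l4 := le _ V4.
have e34 := dotpD w hs.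
have eq3 : dotp w (char_imset R (mix k D2 D1)) = dotp w (char_imset R D1) by lra.
have := seg01 (ci01 D1) (ci01 D2) (ci01 _) ne (sg _ V3 eq3).
have P3 : Phin (mix k D2 D1) = Fk (ap D1) (ap D2) p.+1 k by apply: Phin_mix.
case=> e; have := congr1 PhiR e; rewrite !PhiR_c // => /eqP; rewrite eqr_nat P3 => /eqP e';
  rewrite e' ?F0 ?FN ltnn in lo hi => //.
Qed.

Lemma walk_phi u v k : has_walk (@CIM_pts R n G) u v k -> PhiR v <= PhiR u + k%:R.
Proof.
move=> [f [f0 [fk h]]]; subst u v.
have : forall i, (i <= k)%N -> PhiR (f i) <= PhiR (f 0%N) + i%:R.
  elim => [|i IH] ik; first by rewrite addr0.
  have := edge_phi (h i ik); have := IH (ltnW ik); rewrite -addn1 natrD; lra.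
by apply.
Qed.

Definition kd (key : 'I_n -> nat) : rel 'I_n := fun u v => G u v && (key u < key v)%N.

Lemma kd_dag key : injective key -> is_dag (kd key) /\ has_skeleton (kd key) G.
Proof.
move=> ik; split.
  move=> u v /andP [_ luv]; apply/negP => /connectP [s1 pth1 lst].
  have : (key v <= key (last v s1))%N.
    elim: s1 v pth1 {luv lst} => [|z s1 IH] v //=.
    by move=> /andP [/andP [_ lz] pz]; exact: leq_trans (ltnW lz) (IH _ pz).
  by rewrite -lst => h; move: (leq_ltn_trans h luv); rewrite ltnn.
move=> u v; rewrite /kd (tree_sym tG v u); case Guv: (G u v) => //=.
rewrite -neq_ltn (inj_eq ik); symmetry; apply/eqP => e; subst v.
by rewrite (tree_irr tG) in Guv.
Qed.

Definition idx (y : 'I_n) := index y (x :: s).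

Lemma P_idx j : (j <= p)%N -> idx (Pv j) = j.
Proof. by move=> jp; rewrite /idx /Pv index_uniq //= sz ltnS. Qed.

Lemma P_in j : (j <= p)%N -> Pv j \in x :: s.
Proof. by move=> jp; rewrite /Pv mem_nth //= sz ltnS. Qed.

Lemma p_lt_n : (p < n)%N.
Proof.
have /card_uniqP := uq; rewrite /= sz => <-.
by have := max_card (mem (x :: s)); rewrite card_ord.
Qed.

Lemma idx_lt y : y \in x :: s -> (idx y < n)%N.
Proof.
move=> ys; have := p_lt_n; have : (idx y < size (x :: s))%N by rewrite index_mem.
rewrite /= sz; lia.
Qed.

Lemma idx_inj y z : y \in x :: s -> z \in x :: s -> idx y = idx z -> y = z.
Proof. by move=> ys zs e; rewrite -(nth_index x ys) -(nth_index x zs) -/(idx y) e. Qed.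

Definition keyU (y : 'I_n) : nat := if y \in x :: s then idx y else (n + y)%N.
Definition keyV (y : 'I_n) : nat :=
  if y \in x :: s then (if odd (idx y) then n + idx y else idx y)%N else (2 * n + y)%N.

Lemma keyU_inj : injective keyU.
Proof.
move=> u v; rewrite /keyU; case mu: (u \in x :: s); case mv: (v \in x :: s).
- exact: idx_inj.
- by have := idx_lt mu; lia.
- by have := idx_lt mv; lia.
- by move=> e; apply: ord_inj; lia.
Qed.

Lemma keyV_inj : injective keyV.
Proof.
move=> u v; rewrite /keyV; case mu: (u \in x :: s); case mv: (v \in x :: s).
- move=> e; apply: idx_inj => //; have := idx_lt mu; have := idx_lt mv.
  by move: e; case: (odd (idx u)); case: (odd (idx v)); lia.
- by have := idx_lt mu; case: (odd _); lia.
- by have := idx_lt mv; case: (odd _); lia.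
- by move=> e; apply: ord_inj; lia.
Qed.

Lemma ap_kd key j : (0 < j <= p)%N -> ap (kd key) j = (key (Pv j.-1) < key (Pv j))%N.
Proof.
move=> /andP [j0 jp]; rewrite /ap; have -> : (j == 0%N) = false by apply/eqP; lia.
rewrite jp /kd; have := @P_edge j.-1; rewrite prednK // => -> //; lia.
Qed.

Lemma Phin_U : Phin (kd keyU) = 0%N.
Proof.
rewrite /Phin /cnt big1 // => i _; rewrite /phi.
have -> : ap (kd keyU) i.+1 = true.
  case: (leqP i.+1 p) => ip; last by rewrite /ap /= leqNgt ip.
  by rewrite ap_kd ?ip // /keyU !P_in ?(ltnW ip) // !P_idx ?(ltnW ip) //= ltnSn.
by rewrite /= andbF.
Qed.

Lemma sum_odd m : (\sum_(0 <= i < m) odd i)%N = m./2.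
Proof.
elim: m => [|m IH]; first by rewrite big_geq.
by rewrite big_nat_recr //= IH uphalf_half addnC.
Qed.

Lemma ap_V j : (j <= p)%N -> ap (kd keyV) j = odd j.
Proof.
case: j => [|j] jp; first by [].
rewrite ap_kd ?jp // /keyV !P_in ?(ltnW jp) // !P_idx ?(ltnW jp) //=.
by have := p_lt_n; case: (odd j) => /=; lia.
Qed.

Lemma Phin_V : Phin (kd keyV) = p./2.
Proof.
rewrite /Phin /cnt -sum_odd big_nat_recr //=.
have -> : phi (ap (kd keyV)) p = 0%N.
  by rewrite /phi /ap /= ltnn andbF.
rewrite addn0; apply: eq_big_nat => i /andP [_ ip].
by rewrite /phi !ap_V ?(ltnW ip) //=; case: (odd i).
Qed.

End PathPhi.

Close Scope ring_scope.

Lemma ex_min_nat (P : nat -> Prop) : (exists k, P k) -> exists k, P k /\ forall j, P j -> (k <= j)%N.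
Proof.
move=> [k Pk]; elim: k {-2}k (leqnn k) Pk => [|N IH] k kN Pk.
  by exists k; split => // j _; move: kN; rewrite leqn0 => /eqP ->.
case: (classic (exists j, P j /\ (j < k)%N)) => [[j [Pj jk]]|nj].
  by apply: (IH j) => //; rewrite -ltnS (leq_trans jk kN).
exists k; split => // j Pj; rewrite leqNgt; apply/negP => jk; apply: nj; by exists j.
Qed.

Lemma ex_max_nat (P : nat -> Prop) m : (exists k, P k) -> (forall k, P k -> (k <= m)%N) ->
  exists k, P k /\ forall j, P j -> (j <= k)%N.
Proof.
move=> ex ub.
have [k [Qk mk]] := ex_min_nat (P := fun k => (exists j, P j /\ k = (m - j)%N)) (let: ex_intro k Pk := ex in ex_intro _ (m - k)%N (ex_intro _ k (conj Pk erefl))).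
case: Qk => j [Pj ek]; exists j; split => // i Pi.
have := mk (m - i)%N (ex_intro _ i (conj Pi erefl)); rewrite ek.
have := ub _ Pi; have := ub _ Pj; lia.
Qed.

Section Main.
Variables (R : realFieldType) (n : nat) (G : rel 'I_n).
Hypothesis tG : is_tree G.
Notation V := (@CIM_pts R n G).

Lemma vert_V u : poly_vertex V u -> exists D, [/\ is_dag D, has_skeleton D G & u = char_imset R D].
Proof. by move=> [[D [d [s ->]]] _]; exists D. Qed.

Lemma walk_exists u v : poly_vertex V u -> poly_vertex V v ->
  exists k, has_walk V u v k /\ (k <= num_internal G)%N.
Proof.
move=> /vert_V [D1 [d1 s1 ->]] /vert_V [D2 [d2 s2 ->]].
have [k [w kl]] := walk_ub R tG d1 s1 d2 s2 (leqnn #|Xd D1 D2|).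
exists k; split => //; apply: leq_trans kl _.
have h := Xd_internal tG (dag_orient d1 s1) (dag_orient d2 s2).
exact: h.
Qed.

Lemma dist_exists u v : poly_vertex V u -> poly_vertex V v ->
  exists k, graph_dist V u v k /\ (k <= num_internal G)%N.
Proof.
move=> vu vv; have [k0 [w0 k0l]] := walk_exists vu vv.
have [k [wk mk]] := ex_min_nat (ex_intro (fun k => has_walk V u v k) k0 w0).
exists k; split; first by split.
exact: leq_trans (mk _ w0) k0l.
Qed.

End Main.

Theorem mainTheorem5 (R : realFieldType) (n : nat) (G : rel 'I_n) (p : nat) :
  is_tree G ->
  longest_path_length G p ->
  exists d : nat, is_diam (@CIM_pts R n G) d /\
    (p./2 <= d)%N /\ (d <= num_internal G)%N.
Proof.
move=> tG [[x [s [uq [pth sz]]]] _].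
pose Pd k := exists u v, poly_vertex (@CIM_pts R n G) u /\ poly_vertex (@CIM_pts R n G) v /\
   graph_dist (@CIM_pts R n G) u v k.
have [dU sU] := kd_dag tG (keyU_inj uq pth sz).
have [dV sV] := kd_dag tG (keyV_inj uq pth sz).
have vU := cim_vertex R tG dU sU.
have vV := cim_vertex R tG dV sV.
have [k0 [g0 k0m]] := dist_exists tG vU vV.
have exP : exists k, Pd k by exists k0, (char_imset R (kd G (keyU x s))), (char_imset R (kd G (keyV x s))).
have ubP : forall k, Pd k -> (k <= num_internal G)%N.
  move=> k [u [v [vu [vv [wk mk]]]]].
  have [j [wj jm]] := walk_exists tG vu vv.
  exact: leq_trans (mk _ wj) jm.
have [d [Pdd maxd]] := ex_max_nat exP ubP.
exists d; split; [split|split].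
- move=> u v vu vv; have [k [gk km]] := dist_exists tG vu vv.
  by exists k; split => //; apply: maxd; exists u, v.
- exact: Pdd.
- apply: leq_trans (maxd k0 _); last by exists (char_imset R (kd G (keyU x s))), (char_imset R (kd G (keyV x s))).
  case: g0 => [w _].
  have := walk_phi tG uq pth sz w.
  rewrite (PhiR_c R tG uq pth sz (dag_orient dU sU)) (PhiR_c R tG uq pth sz (dag_orient dV sV)).
  rewrite (Phin_U uq pth sz) (Phin_V uq pth sz) add0r ler_nat //.
- exact: ubP.
Qed.
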